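(* In the setting of the context, let $\ell\in L$, $G_d=(U_d\mid T_d\mid F_d)$ (the matrix $M^{\Delta,H}_d$ with block $R_d$ removed) and $G_{d,I(\ell)}$ its submatrix of rows indexed by $I(\ell)$. Then $$H_d(\ell)=\Big\{[z]\in H_d\ \Big|\ z\in Z_d \text{ has } z^\Delta=U_d\upsilon+T_d\tau+F_d\varphi \text{ with } \begin{pmatrix}\upsilon\\\tau\\\varphi\end{pmatrix}\in\ker G_{d,I(\ell)}\Big\},$$ where, under the isomorphism $H_d\cong\bigoplus_{i=1}^{n_T}\mathbb{D}/(a^d_i)\oplus\mathbb{D}^{n_F}$, such a class $[z]$ has coordinates $(\pi^d(\tau),\varphi)$, $\pi^d$ being the componentwise projections $\mathbb{D}\to\mathbb{D}/(a^d_i)$.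
   Context: $(L,\leq)$ is a CDL (poset with all joins and meets, distributing over each other; least element $0$). $\Delta$ is a finite simplicial complex, $\mathbb{D}$ a PID, $\mu:\Delta\to L$ an $L$-fuzzy subcomplex ($\mu(\sigma_1)\geq\mu(\sigma_2)$ whenever $\sigma_1$ is a face of $\sigma_2$). $\sigma^d_1,\dots,\sigma^d_{n_d}$ are the positively oriented $d$-simplices, $C_d$ the free $\mathbb{D}$-module on them, $c^\Delta$ the coordinate vector; $Z_d=\ker\partial_d$, $B_d=\operatorname{im}\partial_{d+1}$, $H_d=Z_d/B_d$. Reduced bases: fix bases $E^H_d$ of $C_d$ with change-of-basis matrices $M^{\Delta,H}_d$ (columns = simplex-coordinates of elements of $E^H_d$) such that the matrix $D_d$ of $\partial_d$ w.r.t. $E^H_d,E^H_{d-1}$ has the form $(0_{n_{d-1}\times r_{d+1}}\mid D'_d)$, $r_{d+1}=\operatorname{rank}\partial_{d+1}$, the only nonzero entries of $D'_d$ being its first $r_d$ diagonal entries, successively dividing. Elements of $E^H_d$ are of type U (column in $D_d$ zero, row in $D_{d+1}$ has a unit entry), T (column zero, row has a nonzero non-unit entry), R (column nonzero) or F (column zero, row zero), ordered U,T,R,F; $M^{\Delta,H}_d=(U_d\mid T_d\mid R_d\mid F_d)$ with $n_U,n_T,n_R,n_F$ columns; $a^d_1,\dots,a^d_{n_T}$ are the nonzero row entries of the T generators and $A_d=\operatorname{diag}(a^d_i)$. Then $Z_d$ consists of the chains with coordinates $U_d\upsilon+T_d\tau+F_d\varphi$, $B_d$ of those with coordinates $U_d\upsilon+T_dA_d\tau$,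 and $[z]\mapsto(\pi^d(\tau),\varphi)$ is an isomorphism $H_d\cong\bigoplus_i\mathbb{D}/(a^d_i)\oplus\mathbb{D}^{n_F}$. Constraint system: $S(c,I)$ is $(U_d\mid T_dA_d)_I\binom{\upsilon}{\tau}=-c^\Delta_I$ in unknowns $\upsilon\in\mathbb{D}^{n_U},\tau\in\mathbb{D}^{n_T}$ (rows indexed by $I$). $I(\ell)=\{i\mid\mu(\sigma^d_i)\not\geq\ell\}$. $H_d(\ell)=\{[h]\in H_d\mid S(h,I(\ell))\text{ solvable}\}$ (independent of the representative $h\in Z_d$). *)

(* Defs.v *)
From HB Require Import structures.
From mathcomp Require Import all_boot all_order all_algebra.
Set Implicit Arguments. Unset Strict Implicit. Unset Printing Implicit Defensive.
Import Order.Theory GRing.Theory.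
Local Open Scope ring_scope.

Definition dvdr (D : idomainType) (a b : D) : Prop := exists c : D, b = c * a.

Definition ideal_pred (D : idomainType) (P : D -> Prop) : Prop :=
  P 0 /\ (forall x y, P x -> P y -> P (x + y)) /\ (forall s x, P x -> P (s * x)).

Definition is_PID (D : idomainType) : Prop :=
  forall P : D -> Prop, ideal_pred P -> exists a : D, forall x, P x <-> dvdr a x.

Definition complete_lattice (disp : Order.disp_t) (L : porderType disp) : Prop :=
  forall P : L -> Prop, exists s : L,
    (forall x, P x -> (x <= s)%O) /\ (forall u, (forall x, P x -> (x <= u)%O) -> (s <= u)%O).

(* A simplex is a nonempty finite set of vertices; a k-simplex has k+1 vertices. *)
Definition is_simplicial_complex (N : nat) (K : {set {set 'I_N}}) : Prop :=
  set0 \notin K /\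
  (forall s t : {set 'I_N}, s \in K -> t \subset s -> t != set0 -> t \in K).

(* simplices with exactly c vertices, i.e. (c-1)-simplices *)
Definition simp (N : nat) (K : {set {set 'I_N}}) (c : nat) : {set {set 'I_N}} :=
  [set s in K | #|s| == c].

Definition nsimp (N : nat) (K : {set {set 'I_N}}) (c : nat) : nat := #|simp K c|.

Definition is_numbering (N : nat) (K : {set {set 'I_N}})
  (sg : forall c : nat, 'I_(nsimp K c) -> {set 'I_N}) : Prop :=
  forall c, injective (sg c) /\ (forall i, sg c i \in simp K c).

(* Boundary matrix from chains on simplices with c+1 vertices to chains on
   simplices with c vertices (i.e. the paper's boundary map d_c, from
   c-chains to (c-1)-chains), w.r.t. the positively oriented simplices
   (vertices in increasing order):
   d [v_0 < ... < v_c] = sum_i (-1)^i [v_0 .. ^v_i .. v_c]. *)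
Definition bdry (D : idomainType) (N : nat) (K : {set {set 'I_N}})
  (sg : forall c : nat, 'I_(nsimp K c) -> {set 'I_N}) (c : nat)
  : 'M[D]_(nsimp K c, nsimp K c.+1) :=
  \matrix_(i, j)
    (if sg c i \subset sg c.+1 j then
       (-1) ^+ (\sum_(v in sg c.+1 j :\: sg c i) #|[set w in sg c.+1 j | (w < v)%N]|)%N
     else 0).

Definition fuzzy_subcomplex (disp : Order.disp_t) (L : porderType disp)
  (N : nat) (K : {set {set 'I_N}}) (mu : {set 'I_N} -> L) : Prop :=
  forall s t : {set 'I_N}, s \in K -> t \in K -> s \subset t -> (mu t <= mu s)%O.

(* I(l) for d-simplices (d+1 vertices): indices i with mu(sigma^d_i) not >= l *)
Definition Ilev (disp : Order.disp_t) (L : porderType disp)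
  (N : nat) (K : {set {set 'I_N}})
  (sg : forall c : nat, 'I_(nsimp K c) -> {set 'I_N})
  (mu : {set 'I_N} -> L) (d : nat) (l : L) : {set 'I_(nsimp K d.+1)} :=
  [set i | ~~ (l <= mu (sg d.+1 i))%O].

(* M c : columns = simplex coordinates of the basis E^H of the chains on
   simplices with c vertices (the paper's M^{Delta,H}_{c-1}).  The matrix of
   the boundary d_c w.r.t. these bases is (0_{* x r(c+1)} | D'_c), the only
   nonzero entries of D'_c being its first r(c) diagonal entries
   del c 0, ..., del c (r c - 1), successively dividing. Then r c is the
   rank of d_c (the boundary from c-chains, here simplices with c+1 vertices). *)
Definition reduced_bases (D : idomainType) (N : nat) (K : {set {set 'I_N}})
  (sg : forall c : nat, 'I_(nsimp K c) -> {set 'I_N})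
  (M : forall c : nat, 'M[D]_(nsimp K c)) (r : nat -> nat) (del : nat -> nat -> D)
  : Prop :=
  (forall c, M c \in unitmx) /\
  (forall c, (r c <= nsimp K c)%N /\ (r c.+1 + r c <= nsimp K c.+1)%N) /\
  (forall c (i : 'I_(nsimp K c)) (j : 'I_(nsimp K c.+1)),
      (invmx (M c) *m bdry D sg c *m M c.+1) i j =
      if [&& (r c.+1 <= j)%N, (nat_of_ord j == i + r c.+1)%N & (i < r c)%N]
      then del c i else 0) /\
  (forall c i, (i < r c)%N -> del c i != 0) /\
  (forall c i, (i.+1 < r c)%N -> dvdr (del c i) (del c i.+1)).

(* column selection A(:, f k) (f always in range in our uses) *)
Definition colsel (D : idomainType) (m n p : nat) (A : 'M[D]_(m, n))
  (f : 'I_p -> nat) : 'M[D]_(m, p) :=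
  \matrix_(i, k) oapp (fun j : 'I_n => A i j) 0 (insub (f k)).

Definition subrows (D : idomainType) (m n : nat) (I : {set 'I_m})
  (A : 'M[D]_(m, n)) : 'M[D]_(#|I|, n) :=
  \matrix_(k, j) A (enum_val k) j.

(* In dimension d (d-simplices have d+1 vertices, C_d <-> index d.+1):
   the basis vectors of E^H_d are columns of M d.+1, ordered U,T,R,F:
   columns j < r_{d+1} have zero image and row j of D_{d+1} contains the
   entry del d.+1 j (type U if it is a unit, type T otherwise);
   the next r_d columns are of type R, the rest of type F. *)
Definition n_U (D : idomainType) (r : nat -> nat) (del : nat -> nat -> D) (d : nat) : nat :=
  count (fun j => del d.+1 j \is a GRing.unit) (iota 0 (r d.+1)).
Definition n_T (D : idomainType) (r : nat -> nat) (del : nat -> nat -> D) (d : nat) : nat :=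
  (r d.+1 - n_U r del d)%N.
Definition n_F (N : nat) (K : {set {set 'I_N}}) (r : nat -> nat) (d : nat) : nat :=
  (nsimp K d.+1 - (r d.+1 + r d))%N.

Definition U_blk (D : idomainType) (N : nat) (K : {set {set 'I_N}})
  (M : forall c : nat, 'M[D]_(nsimp K c)) (r : nat -> nat) (del : nat -> nat -> D) (d : nat)
  : 'M[D]_(nsimp K d.+1, n_U r del d) :=
  colsel (M d.+1) (fun k => nat_of_ord k).
Definition T_blk (D : idomainType) (N : nat) (K : {set {set 'I_N}})
  (M : forall c : nat, 'M[D]_(nsimp K c)) (r : nat -> nat) (del : nat -> nat -> D) (d : nat)
  : 'M[D]_(nsimp K d.+1, n_T r del d) :=
  colsel (M d.+1) (fun k => (n_U r del d + k)%N).
Definition F_blk (D : idomainType) (N : nat) (K : {set {set 'I_N}})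
  (M : forall c : nat, 'M[D]_(nsimp K c)) (r : nat -> nat) (d : nat)
  : 'M[D]_(nsimp K d.+1, n_F K r d) :=
  colsel (M d.+1) (fun k => (r d.+1 + r d + k)%N).

(* a^d_k : the nonzero row entries of the T generators *)
Definition a_coef (D : idomainType) (r : nat -> nat) (del : nat -> nat -> D) (d : nat)
  (k : 'I_(n_T r del d)) : D := del d.+1 (n_U r del d + k)%N.
Definition A_mat (D : idomainType) (r : nat -> nat) (del : nat -> nat -> D) (d : nat)
  : 'M[D]_(n_T r del d) := diag_mx (\row_k a_coef k).

Definition G_mat (D : idomainType) (N : nat) (K : {set {set 'I_N}})
  (M : forall c : nat, 'M[D]_(nsimp K c)) (r : nat -> nat) (del : nat -> nat -> D) (d : nat)
  : 'M[D]_(nsimp K d.+1, n_U r del d + (n_T r del d + n_F K r d)) :=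
  row_mx (U_blk M r del d) (row_mx (T_blk M r del d) (F_blk M r d)).

Definition is_cycle (D : idomainType) (N : nat) (K : {set {set 'I_N}})
  (sg : forall c : nat, 'I_(nsimp K c) -> {set 'I_N}) (d : nat)
  (h : 'cV[D]_(nsimp K d.+1)) : Prop :=
  bdry D sg d *m h = 0.
Definition is_boundary (D : idomainType) (N : nat) (K : {set {set 'I_N}})
  (sg : forall c : nat, 'I_(nsimp K c) -> {set 'I_N}) (d : nat)
  (h : 'cV[D]_(nsimp K d.+1)) : Prop :=
  exists y : 'cV[D]_(nsimp K d.+2), h = bdry D sg d.+1 *m y.

Definition S_solvable (D : idomainType) (N : nat) (K : {set {set 'I_N}})
  (M : forall c : nat, 'M[D]_(nsimp K c)) (r : nat -> nat) (del : nat -> nat -> D) (d : nat)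
  (h : 'cV[D]_(nsimp K d.+1)) (I : {set 'I_(nsimp K d.+1)}) : Prop :=
  exists (ups : 'cV[D]_(n_U r del d)) (tau : 'cV[D]_(n_T r del d)),
    subrows I (row_mx (U_blk M r del d) (T_blk M r del d *m A_mat r del d)) *m col_mx ups tau
    = - subrows I h.

Definition in_Hdl (D : idomainType) (N : nat) (K : {set {set 'I_N}})
  (sg : forall c : nat, 'I_(nsimp K c) -> {set 'I_N})
  (disp : Order.disp_t) (L : porderType disp) (mu : {set 'I_N} -> L)
  (M : forall c : nat, 'M[D]_(nsimp K c)) (r : nat -> nat) (del : nat -> nat -> D)
  (d : nat) (l : L) (h : 'cV[D]_(nsimp K d.+1)) : Prop :=
  is_cycle sg h /\ S_solvable M r del h (Ilev sg mu d l).

(* Main.v *)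
Require Import Defs.
From HB Require Import structures.
From mathcomp Require Import all_boot all_order all_algebra.
From mathcomp Require Import zify ring.
From Stdlib Require Import ClassicalEpsilon.
Import Order.Theory GRing.Theory.
Local Open Scope ring_scope.
Set Implicit Arguments. Unset Strict Implicit.

Definition get (D : idomainType) n (u : 'cV[D]_n) (j : nat) : D :=
  oapp (fun jj : 'I_n => u jj 0) 0 (insub j).

Lemma getE (D : idomainType) n (u : 'cV[D]_n) (j : 'I_n) : get u j = u j 0.
Proof. by rewrite /get; case: insubP => [jj _ /val_inj -> //|]; rewrite ltn_ord. Qed.

Lemma get_out (D : idomainType) n (u : 'cV[D]_n) (j : nat) : (n <= j)%N -> get u j = 0.
Proof. by move=> h; rewrite /get insubN // -leqNgt. Qed.

Lemma getD (D : idomainType) n (u v : 'cV[D]_n) (j : nat) : get (u + v) j = get u j + get v j.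
Proof. by rewrite /get; case: insubP => [jj _ _|_] /=; rewrite ?mxE ?addr0. Qed.

Definition emb (D : idomainType) n p (s : nat) (x : 'cV[D]_p) : 'cV[D]_n :=
  \col_j (if (s <= j)%N then get x (j - s) else 0).

Definition restr (D : idomainType) n p (s : nat) (w : 'cV[D]_n) : 'cV[D]_p :=
  \col_k get w (s + k).

Lemma get_emb (D : idomainType) n p s (x : 'cV[D]_p) (j : nat) : (j < n)%N ->
  get (emb n s x) j = if (s <= j)%N then get x (j - s) else 0.
Proof. by move=> h; rewrite /get insubT /= mxE. Qed.

Lemma get_restr (D : idomainType) n p s (w : 'cV[D]_n) (m : nat) :
  get (restr p s w) m = if (m < p)%N then get w (s + m) else 0.
Proof. by rewrite /get; case: insubP => [k -> <-|/negbTE ->] /=; rewrite ?mxE. Qed.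

Lemma colsel_emb (D : idomainType) m n p s (A : 'M[D]_(m, n)) (x : 'cV[D]_p) :
  colsel A (fun k => (s + k)%N) *m x = A *m emb n s x.
Proof.
apply/matrixP => i z; rewrite ord1 !mxE.
have E : forall j : 'I_n, (if (s <= j)%N then get x (j - s) else 0) =
   \sum_(k < p) (nat_of_ord j == s + k)%N%:R * x k 0.
  move=> j; case: ifP => hs.
    case: (ltnP (j - s) p) => hk.
      rewrite (_ : (j - s)%N = Ordinal hk) // getE.
      rewrite (bigD1 (Ordinal hk)) //= (_ : (nat_of_ord j == s + (j - s))%N = true); last by apply/eqP; lia.
      rewrite mul1r big1 ?addr0 // => k' hk'.
      case: eqP => [e|]; last by rewrite mul0r.
      by move: hk'; rewrite -(inj_eq val_inj) /=; move/eqP; lia.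
    rewrite get_out // big1 // => k _; case: eqP => [e|]; last by rewrite mul0r.
    by move: hk; rewrite e addKn leqNgt ltn_ord.
  rewrite big1 // => k _; case: eqP => [e|]; last by rewrite mul0r.
  by move: hs; rewrite e leq_addr.
under [RHS]eq_bigr => j _ do rewrite mxE E mulr_sumr.
rewrite exchange_big /=; apply: eq_bigr => k _.
under eq_bigr => j _ do rewrite mulrA mulrC.
rewrite -mulr_sumr mulrC; congr (_ * _).
rewrite mxE; case: insubP => [jj _ ej|hj] /=.
  rewrite (bigD1 jj) //= (_ : (nat_of_ord jj == s + k)%N = true) ?mulr1; last by apply/eqP.
  rewrite big1 ?addr0 // => j hj.
  rewrite (_ : (nat_of_ord j == s + k)%N = false) ?mulr0 //.
  by apply/negbTE; rewrite -ej (inj_eq val_inj).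
rewrite big1 // => j _; case: eqP => [e|]; last by rewrite mulr0.
by move: hj (ltn_ord j); rewrite -e => /negbTE ->.
Qed.

Ltac decide_ifs := repeat match goal with |- context [if ?b then _ else _] =>
  (rewrite (_ : b = true); last by lia) || (rewrite (_ : b = false); last by lia) end.

Section S.
Context (D : idomainType) (N : nat) (K : {set {set 'I_N}})
  (sg : forall c : nat, 'I_(nsimp K c) -> {set 'I_N})
  (M : forall c : nat, 'M[D]_(nsimp K c)) (r : nat -> nat) (del : nat -> nat -> D)
  (H : reduced_bases sg M r del).

Lemma bdry_fact c :
  bdry D sg c = M c *m (invmx (M c) *m bdry D sg c *m M c.+1) *m invmx (M c.+1).
Proof.
case: H => hu _.
by rewrite !mulmxA mulmxV ?hu // mul1mx -mulmxA mulmxV ?hu // mulmx1.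
Qed.

Lemma Dmul c (u : 'cV_(nsimp K c.+1)) (i : 'I_(nsimp K c)) :
  ((invmx (M c) *m bdry D sg c *m M c.+1) *m u) i 0 =
  if (i < r c)%N then del c i * get u (i + r c.+1) else 0.
Proof.
case: H => _ [_ [hD _]].
rewrite mxE; under eq_bigr => j _ do rewrite hD.
case: ifP => hi.
  have E : forall j : 'I_(nsimp K c.+1),
     (if [&& (r c.+1 <= j)%N, (nat_of_ord j == i + r c.+1)%N & true]
      then del c i else 0) * u j 0 =
     if (nat_of_ord j == i + r c.+1)%N then del c i * u j 0 else 0.
    move=> j; case: eqP => e; last by rewrite andbF mul0r.
    by rewrite e leq_addl.
  under eq_bigr => j _ do rewrite E.
  rewrite -big_mkcond /get; case: insubP => [jj _ ej|hn] /=.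
    by rewrite (big_pred1 jj) // => j /=; rewrite -ej (inj_eq val_inj).
  rewrite big_pred0 ?mulr0 // => j; apply/negbTE; apply: contra hn => /eqP <-.
  exact: ltn_ord.
by rewrite big1 // => j _; rewrite !andbF mul0r.
Qed.

Lemma dvdr_trans (a b e : D) : dvdr a b -> dvdr b e -> dvdr a e.
Proof. by move=> [x ->] [y ->]; exists (y * x); rewrite mulrA. Qed.

Lemma unit_prefix c i :
  (i < count (fun j => del c j \is a GRing.unit) (iota 0 (r c)))%N ->
  del c i \is a GRing.unit.
Proof.
case: H => _ [_ [_ [_ hdiv]]] hi.
apply/negPn/negP => hn.
have chain : forall k, (i + k < r c)%N -> dvdr (del c i) (del c (i + k)).
  elim=> [|k IH] hk; first by exists 1; rewrite addn0 mul1r.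
  apply: (dvdr_trans (IH _)); first lia.
  by rewrite addnS; apply: hdiv; rewrite -addnS.
have nu : forall j, (i <= j)%N -> (j < r c)%N -> del c j \isn't a GRing.unit.
  move=> j h1 h2; apply/negP => uj.
  have [x ex] : dvdr (del c i) (del c (i + (j - i))) by apply: chain; lia.
  move: uj; rewrite (_ : (i + (j - i))%N = j) in ex; last by lia.
  by rewrite ex unitrM => /andP [_ hu]; rewrite hu in hn.
case: (leqP (r c) i) => hir.
  by move: (count_size (fun j => del c j \is a GRing.unit) (iota 0 (r c))); rewrite size_iota; lia.
move: hi; rewrite (_ : r c = (i + (r c - i))%N); last by lia.
rewrite iotaD count_cat add0n (@eq_in_count _ _ pred0 (iota i (r c - i))).
  by rewrite count_pred0 addn0; move: (count_size (fun j => del c j \is a GRing.unit) (iota 0 i)); rewrite size_iota; lia.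
move=> j; rewrite mem_iota => /andP [h1 h2] /=; apply/negbTE; apply: nu => //; lia.
Qed.


Lemma cycleE d (h : 'cV_(nsimp K d.+1)) :
  is_cycle sg h <-> forall j, (r d.+1 <= j)%N -> (j < r d.+1 + r d)%N ->
     get (invmx (M d.+1) *m h) j = 0.
Proof.
have [hu [hr [_ [hnz _]]]] := H.
have E : is_cycle sg h <->
   (invmx (M d) *m bdry D sg d *m M d.+1) *m (invmx (M d.+1) *m h) = 0.
  rewrite /is_cycle {1}(bdry_fact d) -!mulmxA; split => E.
    by have := congr1 (mulmx (invmx (M d))) E; rewrite mulmx0 mulKmx ?hu.
  by rewrite E mulmx0.
rewrite E; have [h1 h2] := hr d; split => E0.
  move=> j hj1 hj2.
  have hi : (j - r d.+1 < nsimp K d)%N by lia.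
  have := congr1 (fun m : 'cV[D]_(nsimp K d) => m (Ordinal hi) 0) E0; rewrite Dmul mxE /=.
  rewrite (_ : (j - r d.+1 < r d)%N = true); last by lia.
  rewrite (_ : (j - r d.+1 + r d.+1)%N = j); last by lia.
  move/eqP; rewrite mulf_eq0 (negbTE (hnz _ _ _)) /=; last by lia.
  by move/eqP.
apply/matrixP => i k; rewrite ord1 Dmul mxE; case: ifP => // hi.
by rewrite E0 ?mulr0 //; lia.
Qed.


Lemma nU_le d : (n_U r del d <= r d.+1)%N.
Proof. by rewrite /n_U; move: (count_size (fun j => del d.+1 j \is a GRing.unit) (iota 0 (r d.+1))); rewrite size_iota. Qed.

Lemma blkE d ups tau phi :
  U_blk M r del d *m ups + T_blk M r del d *m tau + F_blk M r d *m phi =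
  M d.+1 *m (emb _ 0 ups + emb _ (n_U r del d) tau + emb _ (r d.+1 + r d) phi).
Proof.
rewrite !mulmxDr /U_blk /T_blk /F_blk -!colsel_emb //.
Qed.

Lemma cycle_blocks d (h : 'cV_(nsimp K d.+1)) :
  is_cycle sg h <-> exists ups tau phi,
    h = U_blk M r del d *m ups + T_blk M r del d *m tau + F_blk M r d *m phi.
Proof.
have [hu [hr _]] := H; have [h1 h2] := hr d; have hnU := nU_le d.
rewrite cycleE; split => [E|[ups [tau [phi ->]]]]; last first.
  move=> j hj1 hj2; rewrite blkE mulKmx ?hu // !getD !get_emb; try lia.
  rewrite (_ : (r d.+1 + r d <= j)%N = false); last by lia.
  rewrite !get_out ?if_same ?addr0 // /n_T; lia.
set w := invmx (M d.+1) *m h.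
exists (restr _ 0 w), (restr _ (n_U r del d) w), (restr _ (r d.+1 + r d) w).
rewrite blkE -[LHS](mulKVmx (hu d.+1)); congr (_ *m _).
apply/matrixP => j z; rewrite ord1 -[LHS]getE !mxE !get_restr /n_T /n_F.
have := ltn_ord j; have := hnU; have := h2.
case: (ltnP j (n_U r del d)) => c1;
[|case: (ltnP j (r d.+1)) => c2; [|case: (ltnP j (r d.+1 + r d)) => c3]] => *;
decide_ifs; rewrite ?add0r ?addr0 //;
  first [by apply: E; lia | by rewrite /w; congr (get _ _); lia].
Qed.

Lemma get_colM n (x : 'cV[D]_n) (g : nat -> D) m :
  get (\col_k (x k 0 * g k)) m = get x m * g m.
Proof. by rewrite /get; case: insubP => [k _ <-|_] /=; rewrite ?mxE ?mul0r. Qed.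

Lemma get_A d (tau : 'cV_(n_T r del d)) m :
  get (A_mat r del d *m tau) m =
  if (m < n_T r del d)%N then del d.+1 (n_U r del d + m) * get tau m else 0.
Proof.
rewrite /get; case: insubP => [k -> <-|/negbTE ->] //=.
by rewrite mul_diag_mx !mxE.
Qed.

Lemma blkE2 d ups x :
  U_blk M r del d *m ups + T_blk M r del d *m x =
  M d.+1 *m (emb _ 0 ups + emb _ (n_U r del d) x).
Proof. by rewrite !mulmxDr /U_blk /T_blk -!colsel_emb. Qed.

Lemma bnd_blocks d (h : 'cV_(nsimp K d.+1)) :
  is_boundary sg h <-> exists ups tau,
    h = U_blk M r del d *m ups + T_blk M r del d *m (A_mat r del d *m tau).
Proof.
have [hu [hr _]] := H; have [h1 h2] := hr d.+1; have hnU := nU_le d.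
split => [[y ->]|[ups [tau ->]]].
  rewrite {1}(bdry_fact d.+1) -!mulmxA.
  set u := invmx (M d.+2) *m y.
  set X := invmx (M d.+1) *m (bdry D sg d.+1 *m (M d.+2 *m u)).
  have XE : X = (invmx (M d.+1) *m bdry D sg d.+1 *m M d.+2) *m u by rewrite /X !mulmxA.
  exists (restr _ 0 X), (restr _ (r d.+2 + n_U r del d) u).
  rewrite blkE2; congr (_ *m _).
  apply/matrixP => j z; rewrite ord1 -[LHS]getE -[RHS]getE getD !get_emb ?get_restr ?get_A //.
  have := ltn_ord j.
  case: (ltnP j (n_U r del d)) => c1 *.
    by decide_ifs; rewrite addr0; congr (get _ _); lia.
  rewrite [LHS]getE XE Dmul.
  case: (ltnP j (r d.+1)) => c2; rewrite /n_T; decide_ifs; rewrite ?add0r ?addr0 //.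
  rewrite get_restr /n_T; decide_ifs.
  rewrite (_ : (n_U r del d + (j - n_U r del d))%N = j); last by lia.
  by congr (_ * get _ _); lia.
pose u := emb (nsimp K d.+2) (r d.+2) (\col_k (ups k 0 * (del d.+1 k)^-1))
        + emb _ (r d.+2 + n_U r del d) tau.
exists (M d.+2 *m u).
rewrite blkE2 {1}(bdry_fact d.+1) -!mulmxA mulKmx ?hu //.
congr (_ *m _); rewrite !mulmxA.
apply/matrixP => j z; rewrite ord1 -[LHS]getE getD !get_emb ?get_A //.
have := ltn_ord j; move=> hj.
rewrite Dmul.
case: (ltnP j (r d.+1)) => c2; last first.
  rewrite /n_T; decide_ifs; rewrite get_out ?addr0 //; lia.
rewrite /u getD !get_emb; try lia.
rewrite (get_colM ups (fun m => (del d.+1 m)^-1)).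
case: (ltnP j (n_U r del d)) => c1.
  decide_ifs; rewrite !addr0 subn0 addnK mulrC divrK //.
  exact: unit_prefix.
rewrite /n_T; decide_ifs; rewrite (get_out ups); last by lia.
rewrite (@get_out _ _ ups (j + r d.+2 - r d.+2)%N); last by lia.
rewrite mul0r !add0r.
rewrite (_ : (n_U r del d + (j - n_U r del d))%N = j); last by lia.
by congr (_ * get _ _); lia.
Qed.

End S.

Lemma subrows_mul (D : idomainType) m n p (I : {set 'I_m}) (A : 'M[D]_(m, n)) (x : 'M[D]_(n, p)) :
  subrows I A *m x = subrows I (A *m x).
Proof. by apply/matrixP => i j; rewrite !mxE; apply: eq_bigr => k _; rewrite mxE. Qed.

Lemma subrowsD (D : idomainType) m n (I : {set 'I_m}) (A B : 'M[D]_(m, n)) :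
  subrows I (A + B) = subrows I A + subrows I B.
Proof. by apply/matrixP => i j; rewrite !mxE. Qed.

Lemma subrowsN (D : idomainType) m n (I : {set 'I_m}) (A : 'M[D]_(m, n)) :
  subrows I (- A) = - subrows I A.
Proof. by apply/matrixP => i j; rewrite !mxE. Qed.

Lemma S_iff (D : idomainType) N (K : {set {set 'I_N}})
  (M : forall c : nat, 'M[D]_(nsimp K c)) r del d h I :
  S_solvable M r del h I <-> exists ups tau,
    subrows I (U_blk M r del d *m ups + T_blk M r del d *m (A_mat r del d *m tau) + h) = 0.
Proof.
rewrite /S_solvable; split => [[ups [tau E]]|[ups [tau E]]]; exists ups, tau; move: E;
  rewrite subrows_mul mul_row_col -mulmxA !subrowsD.
  by move=> ->; rewrite addNr.
by move/eqP; rewrite addr_eq0 => /eqP.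
Qed.

Lemma G_iff (D : idomainType) N (K : {set {set 'I_N}})
  (M : forall c : nat, 'M[D]_(nsimp K c)) r del d (I : {set 'I_(nsimp K d.+1)})
  (ups : 'cV_(n_U r del d)) (tau : 'cV_(n_T r del d)) (phi : 'cV_(n_F K r d)) :
  subrows I (G_mat M r del d) *m col_mx ups (col_mx tau phi) =
  subrows I (U_blk M r del d *m ups + T_blk M r del d *m tau + F_blk M r d *m phi).
Proof. by rewrite subrows_mul /G_mat !mul_row_col addrA. Qed.

Theorem mainTheorem17
  (D : idomainType) (N : nat) (K : {set {set 'I_N}})
  (sg : forall c : nat, 'I_(nsimp K c) -> {set 'I_N})
  (disp : Order.disp_t) (L : bDistrLatticeType disp) (mu : {set 'I_N} -> L)
  (M : forall c : nat, 'M[D]_(nsimp K c)) (r : nat -> nat) (del : nat -> nat -> D)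
  (d : nat) (l : L) :
  is_PID D ->
  is_simplicial_complex K ->
  is_numbering sg ->
  complete_lattice L ->
  fuzzy_subcomplex K mu ->
  reduced_bases sg M r del ->
  (forall h : 'cV[D]_(nsimp K d.+1),
     is_cycle sg h ->
     (in_Hdl sg mu M r del l h <->
      exists z : 'cV[D]_(nsimp K d.+1),
        [/\ is_cycle sg z, is_boundary sg (z - h) &
         exists (ups : 'cV[D]_(n_U r del d)) (tau : 'cV[D]_(n_T r del d))
                (phi : 'cV[D]_(n_F K r d)),
           z = U_blk M r del d *m ups + T_blk M r del d *m tau + F_blk M r d *m phi /\
           subrows (Ilev sg mu d l) (G_mat M r del d) *m col_mx ups (col_mx tau phi) = 0])) /\
  (forall (h : 'cV[D]_(nsimp K d.+1))
          (ups_h : 'cV[D]_(n_U r del d)) (tau_h : 'cV[D]_(n_T r del d))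
          (phi_h : 'cV[D]_(n_F K r d)),
     h = U_blk M r del d *m ups_h + T_blk M r del d *m tau_h + F_blk M r d *m phi_h ->
     (in_Hdl sg mu M r del l h <->
      exists (ups : 'cV[D]_(n_U r del d)) (tau : 'cV[D]_(n_T r del d))
             (phi : 'cV[D]_(n_F K r d)),
        [/\ subrows (Ilev sg mu d l) (G_mat M r del d) *m col_mx ups (col_mx tau phi) = 0,
            (forall k : 'I_(n_T r del d), dvdr (a_coef k) (tau k 0 - tau_h k 0)) &
            phi = phi_h])).
Proof.
move=> _ _ _ _ _ H; split.
  move=> h hc; rewrite /in_Hdl; split.
    move=> [_ /S_iff [ups' [tau' E]]].
    have hbc : is_cycle sg (U_blk M r del d *m ups' + T_blk M r del d *m (A_mat r del d *m tau')).
      apply/(cycle_blocks H); exists ups', (A_mat r del d *m tau'), 0.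
      by rewrite mulmx0 addr0.
    set z := U_blk M r del d *m ups' + _ + h in E.
    have zc : is_cycle sg z by rewrite /is_cycle /z mulmxDr hbc hc addr0.
    have [ups [tau [phi Ez]]] := (cycle_blocks H z).1 zc.
    exists z; split => //.
      by rewrite /z addrK; apply/(bnd_blocks H); exists ups', tau'.
    by exists ups, tau, phi; split => //; rewrite G_iff -Ez.
  move=> [z [zc zb [ups [tau [phi [Ez EG]]]]]]; split => //.
  have [ups' [tau' E']] := (bnd_blocks H (z - h)).1 zb.
  apply/S_iff; exists ups', tau'.
  by rewrite -E' subrK -EG G_iff Ez.
move=> h ups_h tau_h phi_h Eh.
have hc : is_cycle sg h by apply/(cycle_blocks H); exists ups_h, tau_h, phi_h.
rewrite /in_Hdl; split.
  move=> [_ /S_iff [ups' [tau' E]]].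
  exists (ups_h + ups'), (tau_h + A_mat r del d *m tau'), phi_h; split => //.
    rewrite G_iff -E Eh; congr (subrows _ _); rewrite !mulmxDr.
    by apply/matrixP => i j; rewrite !mxE; ring.
  move=> k; exists (tau' k 0).
  by rewrite mxE addrAC subrr add0r mul_diag_mx !mxE mulrC.
move=> [ups [tau [phi [EG Ed Ephi]]]]; subst phi; split => //.
apply/S_iff.
pose c k := proj1_sig (constructive_indefinite_description _ (Ed k)).
exists (ups - ups_h), (\col_k c k).
have EA : A_mat r del d *m \col_k c k = tau - tau_h.
  apply/matrixP => k z; rewrite ord1 mul_diag_mx !mxE.
  rewrite /c; case: constructive_indefinite_description => x /= ->.
  by rewrite mulrC.
rewrite EA -EG G_iff Eh; congr (subrows _ _); rewrite !mulmxBr.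
by apply/matrixP => i j; rewrite !mxE; ring.
Qed.
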